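(* Let $G$, $\rho'$, $\chi$, $d$, $v_1,v_2$, $\Phi_1,\Phi_2$, $V_1,V_2\subseteq L^2(G)$ and the $G$-linear unitary map $M:V_1\to V_2$ (extended by $0$ on $V_1^\perp$) be as follows: $G$ is a finite group, $\rho':G\to \mathrm{U}(\mathcal{H})$ is an irreducible unitary representation on a $d$-dimensional complex Hilbert space with character $\chi$, $v_1,v_2\in\mathcal{H}$ are nonzero, $\Phi_i=(\rho'(g)v_i)_{g\in G}$, and $V_i$ is the column space of the Gram matrix of $\Phi_i$. Let $\Pi_{V_i}$ denote the orthogonal projection of $L^2(G)$ onto $V_i$. For $a\in G$ let $\chi_a(g)=\chi(ga)$ and $A_{\chi,a}f=f*\overline{\chi_a}$ for $f\in L^2(G)$. Then for every $a\in G$ there is $\lambda_a\in\mathbb{C}$ such that $$\lambda_a Mf=\Pi_{V_2}A_{\chi,a}\Pi_{V_1}f\quad\text{for all }f\in L^2(G),$$ and $\lambda_a\neq 0$ for at least one $a\in G$.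
   Context: $L^2(G)$ is the space of functions $G\to\mathbb{C}$ with convolution $(f*h)(s)=\sum_{x\in G}f(x)h(x^{-1}s)$ and left regular representation $\rho(g)f=\delta_g*f$. The Gram matrix of $\Phi_i$ is $[\langle\rho'(g_2)v_i,\rho'(g_1)v_i\rangle]_{g_1,g_2\in G}$; its column space $V_i$ is invariant and irreducible under the left regular representation with character $\chi$. $M$ is $G$-linear: it commutes with $\rho(g)$ for all $g$. *)

(* Defs.v *)
From HB Require Import structures.
From mathcomp Require Import all_boot all_order all_algebra all_fingroup.
From mathcomp Require Import all_field all_character.
From Stdlib Require Import ClassicalEpsilon.
Set Implicit Arguments. Unset Strict Implicit. Unset Printing Implicit Defensive.
Import Order.TTheory GRing.Theory Num.Theory.
Local Open Scope ring_scope.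
Local Open Scope group_scope.

Definition L2 (gT : finGroupType) := {ffun gT -> algC}.

Definition L2dot (gT : finGroupType) (f h : L2 gT) : algC :=
  (\sum_(x : gT) f x * (h x)^*)%R.

Definition Hdot (d : nat) (x y : 'cV[algC]_d) : algC :=
  (\sum_(i < d) x i 0 * (y i 0)^*)%R.

Definition conv (gT : finGroupType) (f h : L2 gT) : L2 gT :=
  [ffun s : gT => (\sum_(x : gT) f x * h (x^-1 * s)%g)%R].

(* Left regular representation rho(g) f = delta_g * f, i.e. (rho(g) f)(s) = f(g^-1 s). *)
Definition delta (gT : finGroupType) (g : gT) : L2 gT :=
  [ffun x => if x == g then 1%R else 0%R].
Definition lreg (gT : finGroupType) (g : gT) (f : L2 gT) : L2 gT :=
  conv (delta g) f.

Definition rchar (gT : finGroupType) (d : nat)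
  (rG : mx_representation algC [set: gT] d) (g : gT) : algC := \tr (rG g).

(* Column g2 of the Gram matrix [<rho'(g2) v, rho'(g1) v>]_{g1,g2}, as a function of g1. *)
Definition gram_col (gT : finGroupType) (d : nat)
  (rG : mx_representation algC [set: gT] d) (v : 'cV[algC]_d) (g2 : gT) : L2 gT :=
  [ffun g1 => Hdot (rG g2 *m v) (rG g1 *m v)].

Definition gram_colspace (gT : finGroupType) (d : nat)
  (rG : mx_representation algC [set: gT] d) (v : 'cV[algC]_d) (f : L2 gT) : Prop :=
  exists c : gT -> algC, f = [ffun g1 => (\sum_(g2 : gT) c g2 * gram_col rG v g2 g1)%R].

Definition orth_to (gT : finGroupType) (V : L2 gT -> Prop) (f : L2 gT) : Prop :=
  forall w, V w -> L2dot f w = 0%R.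

Definition is_orthproj (gT : finGroupType) (V : L2 gT -> Prop) (f p : L2 gT) : Prop :=
  V p /\ orth_to V [ffun x => f x - p x]%R.

(* The orthogonal projection Pi_V (well defined for the finite-dimensional
   subspaces used here; chosen by the (unique) characterization). *)
Definition orthproj (gT : finGroupType) (V : L2 gT -> Prop) (f : L2 gT) : L2 gT :=
  epsilon (inhabits f) (fun p => is_orthproj V f p).

Definition Achi (gT : finGroupType) (chi : gT -> algC) (a : gT) (f : L2 gT) : L2 gT :=
  conv f [ffun g : gT => (chi (g * a)%g)^*%R].

(* Main.v *)
Require Import Defs.
From HB Require Import structures.
From mathcomp Require Import all_boot all_order all_algebra all_fingroup.
From mathcomp Require Import all_field all_character ring.
From Stdlib Require Import ClassicalEpsilon.
Import Order.TTheory GRing.Theory Num.Theory Num.Def.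
Set Implicit Arguments.
Local Open Scope ring_scope.
Local Open Scope sesquilinear_scope.

Lemma HdotE d (x y : 'cV[algC]_d) : Hdot x y = \tr (x *m y ^t conjC).
Proof.
rewrite /Hdot /mxtrace; apply: eq_bigr => i _.
by rewrite !mxE big_ord1 !mxE.
Qed.

Lemma Hdot_conj d (x y : 'cV[algC]_d) : (Hdot x y)^* = Hdot y x.
Proof.
rewrite /Hdot rmorph_sum; apply: eq_bigr => i _.
by rewrite rmorphM /= conjCK mulrC.
Qed.

Lemma trC_mul m n p (A : 'M[algC]_(m, n)) (B : 'M[algC]_(n, p)) :
  (A *m B) ^t conjC = B ^t conjC *m A ^t conjC.
Proof. by rewrite trmx_mul map_mxM. Qed.

Lemma conj_tr n (A : 'M[algC]_n) : (\tr A)^* = \tr (A ^t conjC).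
Proof. by rewrite trace_map_mx mxtrace_tr. Qed.

Lemma rG_adj (gT : finGroupType) d (rG : mx_representation algC [set: gT] d)
  (rGu : forall g : gT, rG g \is unitarymx) (g : gT) :
  (rG g) ^t conjC = rG (g^-1)%g.
Proof.
by rewrite -invmx_unitary // repr_mxV ?inE.
Qed.

Lemma rGM (gT : finGroupType) d (rG : mx_representation algC [set: gT] d)
  (g h : gT) : rG (g * h)%g = rG g *m rG h.
Proof. by rewrite repr_mxM ?inE. Qed.

Lemma lregE (gT : finGroupType) (g : gT) (f : L2 gT) s :
  lreg g f s = f (g^-1 * s)%g.
Proof.
rewrite /lreg /conv /delta ffunE (bigD1 g) //= ffunE eqxx mul1r big1 ?addr0 //.
by move=> x /negbTE nx; rewrite ffunE nx mul0r.
Qed.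

Lemma Av (gT : finGroupType) d (rG : mx_representation algC [set: gT] d)
  (rG_irr : mx_irreducible rG) (d_gt0 : (0 < d)%N) (X : 'M[algC]_d) :
  \sum_(g : gT) rG (g^-1)%g *m X *m rG g
   = (#|gT|%:R / d%:R * \tr X)%:M.
Proof.
have absG : mx_absolutely_irreducible rG.
  exact: (@group_closure_closed_field algC gT [set: gT]%G d rG rG_irr).
set Z := \sum_(g : gT) _.
have cZ : centgmx rG Z.
  apply/centgmxP => x _; rewrite /Z mulmx_suml mulmx_sumr.
  rewrite [RHS](reindex_inj (mulIg x)) /=; apply: eq_bigr => g _.
  by rewrite !rGM invMg !mulmxA -rGM mulgA mulgV mul1g.
have /is_scalar_mxP [a Za] := mx_abs_irr_cent_scalar absG cZ.
have : \tr Z = #|gT|%:R * \tr X.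
  rewrite /Z raddf_sum /= (eq_bigr (fun _ => \tr X)).
    by rewrite sumr_const mulr_natl.
  move=> g _; rewrite mxtrace_mulC mulmxA -rGM mulgV repr_mx1 mul1mx //.
rewrite Za mxtrace_scalar => ha.
have dn0 : (d%:R : algC) != 0 by rewrite pnatr_eq0 -lt0n.
congr (_%:M); apply: (mulfI dn0).
by rewrite mulrA [d%:R * (_ / _)]mulrC divfK // -ha mulr_natl.
Qed.


Lemma sum_eq1 (I : finType) (l : I) (F : I -> algC) :
  \sum_k ((k == l)%:R * F k) = F l.
Proof.
rewrite (bigD1 l) //= eqxx mul1r big1 ?addr0 // => k /negbTE ->.
by rewrite mul0r.
Qed.

Lemma mul_delta_entry n (A B : 'M[algC]_n) (j i k l : 'I_n) :
  (A *m delta_mx j i *m B) k l = A k j * B i l.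
Proof.
rewrite -mulmxA mxE (bigD1 j) //= big1 ?addr0.
  congr (_ * _); rewrite mxE (bigD1 i) //= mxE !eqxx mul1r big1 ?addr0 //.
  by move=> p /negbTE np; rewrite mxE np andbF mul0r.
move=> p /negbTE np; rewrite mxE big1 ?mulr0 // => q _.
by rewrite mxE np mul0r.
Qed.

Lemma tr_delta n (j i : 'I_n) : \tr (delta_mx j i : 'M[algC]_n) = (j == i)%:R.
Proof.
rewrite /mxtrace (bigD1 j) //= mxE eqxx /= big1 ?addr0 ?(eq_sym i) //.
by move=> k /negbTE nk; rewrite mxE nk.
Qed.

Lemma FI (gT : finGroupType) d (rG : mx_representation algC [set: gT] d)
  (rG_irr : mx_irreducible rG) (d_gt0 : (0 < d)%N) (Y : 'M[algC]_d) :
  \sum_(x : gT) \tr (rG (x^-1)%g *m Y) *: rG x = (#|gT|%:R / d%:R) *: Y.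
Proof.
apply/matrixP => i l; rewrite summxE mxE.
have key : forall k j : 'I_d, \sum_(x : gT) rG (x^-1)%g k j * rG x i l
    = (#|gT|%:R / d%:R * (j == i)%:R) *+ (k == l).
  move=> k j; have := Av rG_irr d_gt0 (delta_mx j i); move/matrixP/(_ k l).
  rewrite summxE tr_delta mxE => <-.
  by apply: eq_bigr => x _; rewrite mul_delta_entry.
transitivity (\sum_(k < d) \sum_(j < d) Y j k * \sum_(x : gT) rG (x^-1)%g k j * rG x i l).
  under eq_bigr => x _ do rewrite mxE /mxtrace mulr_suml.
  rewrite exchange_big; apply: eq_bigr => k _.
  under eq_bigr => x _ do rewrite mxE mulr_suml.
  rewrite exchange_big; apply: eq_bigr => j _; rewrite mulr_sumr.
  by apply: eq_bigr => x _; rewrite mulrCA mulrA.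
under eq_bigr => k _ do under eq_bigr => j _ do rewrite key.
rewrite (eq_bigr (fun k => (k == l)%:R * (#|gT|%:R / d%:R * Y i k))).
  by rewrite sum_eq1.
move=> k _; case: eqP => _; rewrite ?mulr0n ?mulr1n ?mul0r ?mul1r; last first.
  by rewrite big1 // => j _; rewrite mulr0.
rewrite (eq_bigr (fun j => (j == i)%:R * (#|gT|%:R / d%:R * Y j k))) ?sum_eq1 //.
by move=> j _; rewrite mulrC mulrAC mulrC.
Qed.


Lemma GO (gT : finGroupType) d (rG : mx_representation algC [set: gT] d)
  (rG_irr : mx_irreducible rG) (d_gt0 : (0 < d)%N) (Y W : 'M[algC]_d) :
  \sum_(x : gT) \tr (rG (x^-1)%g *m Y) * \tr (rG x *m W)
   = #|gT|%:R / d%:R * \tr (Y *m W).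
Proof.
under eq_bigr => x _ do rewrite -mxtraceZ scalemxAl.
by rewrite -raddf_sum /= -mulmx_suml FI // -scalemxAl mxtraceZ.
Qed.

Lemma HdotR (gT : finGroupType) d (rG : mx_representation algC [set: gT] d)
  (rGu : forall g : gT, rG g \is unitarymx) (z v : 'cV[algC]_d) (g : gT) :
  Hdot z (rG g *m v) = \tr (rG (g^-1)%g *m (z *m v ^t conjC)).
Proof. by rewrite HdotE trC_mul rG_adj // mulmxA mxtrace_mulC. Qed.

Lemma HdotL (gT : finGroupType) d (rG : mx_representation algC [set: gT] d)
  (u y : 'cV[algC]_d) (g : gT) :
  Hdot (rG g *m u) y = \tr (rG g *m (u *m y ^t conjC)).
Proof. by rewrite HdotE mulmxA. Qed.

Lemma Sorth (gT : finGroupType) d (rG : mx_representation algC [set: gT] d)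
  (rGu : forall g : gT, rG g \is unitarymx)
  (rG_irr : mx_irreducible rG) (d_gt0 : (0 < d)%N) (x y u v : 'cV[algC]_d) :
  \sum_(g : gT) Hdot x (rG g *m v) * (Hdot y (rG g *m u))^*
   = #|gT|%:R / d%:R * Hdot x y * Hdot u v.
Proof.
under eq_bigr => g _ do rewrite Hdot_conj HdotR // HdotL.
rewrite GO // -[RHS]mulrA; congr (_ * _).
rewrite mulmxA -(mulmxA x) [_ *m u]mx11_scalar mul_mx_scalar -scalemxAl mxtraceZ.
rewrite mulrC (HdotE x); congr (_ * _).
by rewrite HdotE mxtrace_mulC /mxtrace big_ord1.
Qed.

Lemma CH (gT : finGroupType) d (rG : mx_representation algC [set: gT] d)
  (rGu : forall g : gT, rG g \is unitarymx)
  (rG_irr : mx_irreducible rG) (d_gt0 : (0 < d)%N) (z v : 'cV[algC]_d) (s a : gT) :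
  \sum_(x : gT) Hdot z (rG x *m v) * (rchar rG ((x^-1 * s) * a)%g)^*
   = #|gT|%:R / d%:R * Hdot z (rG (s * a)%g *m v).
Proof.
under eq_bigr => x _ do rewrite HdotR // /rchar conj_tr rG_adj // !invMg invgK
   mulgA rGM (mxtrace_mulC (rG (a^-1 * s^-1)%g)).
by rewrite GO // HdotR // mxtrace_mulC invMg.
Qed.


Lemma sum_normsq_eq0 (I : finType) (F : I -> algC) :
  \sum_i F i * (F i)^* = 0 -> forall i, F i = 0.
Proof.
move=> /eqP; rewrite psumr_eq0 => [/allP H i|i _]; last exact: mul_conjC_ge0.
by apply/eqP; rewrite -mul_conjC_eq0; apply: H; rewrite mem_index_enum.
Qed.

Lemma Hdot_eq0 d (v : 'cV[algC]_d) : Hdot v v = 0 -> v = 0.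
Proof.
move=> /sum_normsq_eq0 H; apply/matrixP => i j.
by rewrite (ord1 j) mxE H.
Qed.

Lemma L2dot_eq0 (gT : finGroupType) (f : L2 gT) : L2dot f f = 0 -> f = [ffun => 0].
Proof. by move=> /sum_normsq_eq0 H; apply/ffunP => x; rewrite ffunE H. Qed.

Lemma L2dot_subl (gT : finGroupType) (a b w : L2 gT) :
  L2dot [ffun x => a x - b x] w = L2dot a w - L2dot b w.
Proof.
rewrite /L2dot -sumrB; apply: eq_bigr => x _; by rewrite ffunE mulrBl.
Qed.

Lemma orthproj_eq (gT : finGroupType) (V : L2 gT -> Prop) (f p : L2 gT) :
  (forall a b, V a -> V b -> V [ffun x => a x - b x]) ->
  is_orthproj V f p -> orthproj V f = p.
Proof.
move=> Vsub pP.
have := epsilon_spec (inhabits f) (fun p => is_orthproj V f p) (ex_intro _ p pP).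
rewrite -/(orthproj V f); set q := orthproj V f; case=> Vq oq; case: pP => Vp op.
have Ve := Vsub q p Vq Vp.
have : L2dot [ffun x => q x - p x] [ffun x => q x - p x] = 0.
  have He : [ffun x => q x - p x] =
            [ffun x => [ffun x => f x - p x] x - [ffun x => f x - q x] x] :> L2 gT.
    by apply/ffunP => x; rewrite !ffunE; apply/esym; rewrite opprB addrC addrA subrK.
  rewrite {1}He L2dot_subl (op _ Ve) (oq _ Ve) subrr //.
move/L2dot_eq0 => /ffunP H; apply/ffunP => x; have := H x.
by rewrite !ffunE => /eqP; rewrite subr_eq0 => /eqP.
Qed.


Lemma Nn0 (gT : finGroupType) d (d_gt0 : (0 < d)%N) :
  (#|gT|%:R / d%:R : algC) != 0.
Proof.
rewrite mulf_eq0 invr_eq0 !pnatr_eq0 negb_or -!lt0n d_gt0 andbT.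
by rewrite -cardsT (cardG_gt0 [set: gT]%G).
Qed.

Definition Pv (gT : finGroupType) d (rG : mx_representation algC [set: gT] d)
  (v : 'cV[algC]_d) (f : L2 gT) : L2 gT :=
  [ffun g => (#|gT|%:R / d%:R * Hdot v v)^-1 *
             \sum_(h : gT) f h * gram_col rG v h g].

Lemma gram_sub (gT : finGroupType) d (rG : mx_representation algC [set: gT] d)
  (v : 'cV[algC]_d) a b :
  gram_colspace rG v a -> gram_colspace rG v b ->
  gram_colspace rG v [ffun x => a x - b x].
Proof.
move=> [ca ->] [cb ->]; exists (fun g => ca g - cb g).
apply/ffunP => x; rewrite !ffunE -sumrB; apply: eq_bigr => g _.
by rewrite mulrBl.
Qed.

Lemma L2dot_span (gT : finGroupType) d (rG : mx_representation algC [set: gT] d)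
  (v : 'cV[algC]_d) (z w : L2 gT) :
  gram_colspace rG v w -> (forall h, L2dot z (gram_col rG v h) = 0) ->
  L2dot z w = 0.
Proof.
move=> [c ->] H.
transitivity (\sum_(h : gT) (c h)^* * L2dot z (gram_col rG v h)).
  rewrite /L2dot; under eq_bigr => x _ do rewrite ffunE rmorph_sum mulr_sumr.
  rewrite exchange_big; apply: eq_bigr => h _; rewrite mulr_sumr.
  by apply: eq_bigr => x _; rewrite rmorphM /= mulrCA.
by rewrite big1 // => h _; rewrite H mulr0.
Qed.

Lemma C1 (gT : finGroupType) d (rG : mx_representation algC [set: gT] d)
  (rGu : forall g : gT, rG g \is unitarymx)
  (rG_irr : mx_irreducible rG) (d_gt0 : (0 < d)%N) (v : 'cV[algC]_d)
  (v_neq0 : v != 0) (f : L2 gT) (h' : gT) :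
  L2dot (Pv rG v f) (gram_col rG v h') = L2dot f (gram_col rG v h').
Proof.
have nv0 : Hdot v v != 0 by apply/eqP => /Hdot_eq0 /eqP; rewrite (negbTE v_neq0).
have c0 : (#|gT|%:R / d%:R * Hdot v v : algC) != 0 by rewrite mulf_neq0 ?Nn0.
rewrite /L2dot.
under eq_bigr => g _ do rewrite ffunE mulr_sumr mulr_suml.
rewrite exchange_big; apply: eq_bigr => h _.
rewrite /gram_col ffunE Hdot_conj.
under eq_bigr => g _ do rewrite (mulrA _ (f h)) -mulrA.
rewrite -mulr_sumr.
transitivity ((#|gT|%:R / d%:R * Hdot v v)^-1 * f h *
   (#|gT|%:R / d%:R * Hdot (rG h *m v) (rG h' *m v) * Hdot v v)).
  congr (_ * _); rewrite -(Sorth rGu rG_irr d_gt0 (rG h *m v) (rG h' *m v) v v).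
  by apply: eq_bigr => g _; rewrite !ffunE.
move: c0; set N := (#|gT|%:R / d%:R); set nv := Hdot v v.
set X := Hdot (rG h *m v) _ => c0.
by rewrite [N * X * nv]mulrAC -mulrA mulrCA mulKf.
Qed.

Lemma projE (gT : finGroupType) d (rG : mx_representation algC [set: gT] d)
  (rGu : forall g : gT, rG g \is unitarymx)
  (rG_irr : mx_irreducible rG) (d_gt0 : (0 < d)%N) (v : 'cV[algC]_d)
  (v_neq0 : v != 0) (f : L2 gT) :
  orthproj (gram_colspace rG v) f = Pv rG v f.
Proof.
apply: orthproj_eq; first exact: gram_sub.
split.
  exists (fun h => (#|gT|%:R / d%:R * Hdot v v)^-1 * f h).
  by apply/ffunP => g; rewrite !ffunE mulr_sumr; apply: eq_bigr => h _; rewrite mulrA.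
move=> w Vw; apply: (L2dot_span Vw) => h.
by rewrite L2dot_subl C1 // subrr.
Qed.


Lemma Hdot_adj (gT : finGroupType) d (rG : mx_representation algC [set: gT] d)
  (rGu : forall g : gT, rG g \is unitarymx) (w z : 'cV[algC]_d) (h : gT) :
  Hdot w (rG (h^-1)%g *m z) = Hdot (rG h *m w) z.
Proof.
by rewrite !HdotE trC_mul rG_adj // invgK mulmxA mxtrace_mulC mulmxA.
Qed.

Lemma Hdot_suml (gT : finGroupType) d (c : gT -> algC) (x : gT -> 'cV[algC]_d) y :
  Hdot (\sum_g c g *: x g) y = \sum_g c g * Hdot (x g) y.
Proof.
rewrite HdotE mulmx_suml raddf_sum /=; apply: eq_bigr => g _.
by rewrite -scalemxAl mxtraceZ HdotE.
Qed.

Lemma Msum_gen (gT : finGroupType) (M : L2 gT -> L2 gT)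
  (M_linear : forall (c : algC) (f h : L2 gT),
      M [ffun x => c * f x + h x] = [ffun x => c * M f x + M h x])
  (M0 : M [ffun => 0] = [ffun => 0])
  (a : gT -> algC) (fs : gT -> L2 gT) (r : seq gT) :
  M [ffun g => \sum_(h <- r) a h * fs h g] = [ffun s => \sum_(h <- r) a h * M (fs h) s].
Proof.
elim: r => [|x r IH].
  rewrite (_ : [ffun g => _] = [ffun => 0]); last by apply/ffunP => g; rewrite !ffunE big_nil.
  by rewrite M0; apply/ffunP => g; rewrite !ffunE big_nil.
rewrite (_ : [ffun g => _] = [ffun g => a x * fs x g +
      [ffun g => \sum_(h <- r) a h * fs h g] g]); last first.
  by apply/ffunP => g; rewrite !ffunE big_cons.
rewrite M_linear IH; apply/ffunP => g; rewrite !ffunE big_cons.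
by [].
Qed.


Unset Implicit Arguments.

Theorem mainTheorem4 (gT : finGroupType) (d : nat)
  (rG : mx_representation algC [set: gT] d)
  (rG_unitary : forall g : gT, rG g \is unitarymx)
  (rG_irr : mx_irreducible rG)
  (v1 v2 : 'cV[algC]_d) (v1_neq0 : v1 != 0) (v2_neq0 : v2 != 0)
  (M : L2 gT -> L2 gT)
  (M_linear : forall (c : algC) (f h : L2 gT),
      M [ffun x => c * f x + h x] = [ffun x => c * M f x + M h x])
  (M_maps : forall f, gram_colspace rG v1 f -> gram_colspace rG v2 (M f))
  (M_onto : forall h, gram_colspace rG v2 h ->
      exists f, gram_colspace rG v1 f /\ M f = h)
  (M_isometry : forall f h, gram_colspace rG v1 f -> gram_colspace rG v1 h ->
      L2dot (M f) (M h) = L2dot f h)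
  (M_zero_orth : forall f, orth_to (gram_colspace rG v1) f -> M f = [ffun => 0])
  (M_Glinear : forall (g : gT) (f : L2 gT), M (lreg g f) = lreg g (M f)) :
  exists lam : gT -> algC,
    (forall (a : gT) (f : L2 gT),
       [ffun x => lam a * M f x] =
       orthproj (gram_colspace rG v2)
         (Achi (rchar rG) a (orthproj (gram_colspace rG v1) f)))
    /\ exists a : gT, lam a != 0.
Proof.
have d_gt0 : (0 < d)%N.
  rewrite lt0n; apply: contra v1_neq0 => /eqP d0; apply/eqP/matrixP => i j.
  by exfalso; have := ltn_ord i; rewrite {2}d0.
set N : algC := #|gT|%:R / d%:R.
have N0 : N != 0 by exact: Nn0.
have nv0 : forall v : 'cV[algC]_d, v != 0 -> Hdot v v != 0.
  by move=> v vn0; apply/eqP => /Hdot_eq0 /eqP; rewrite (negbTE vn0).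
have n10 := nv0 _ v1_neq0; have n20 := nv0 _ v2_neq0.
have SO := Sorth rG_unitary rG_irr d_gt0.
have M0 : M [ffun => 0] = [ffun => 0].
  by apply: M_zero_orth => w _; rewrite /L2dot big1 // => x _; rewrite ffunE mul0r.
have Msum := Msum_gen M M_linear M0.
have MZ : forall c (f : L2 gT), M [ffun x => c * f x] = [ffun x => c * M f x].
  move=> c f; have := M_linear c f [ffun => 0].
  rewrite M0 (_ : [ffun x => c * f x + _] = [ffun x => c * f x]).
    by move=> ->; apply/ffunP => x; rewrite !ffunE addr0.
  by apply/ffunP => x; rewrite !ffunE addr0.
pose F (v w : 'cV[algC]_d) : L2 gT := [ffun g => Hdot w (rG g *m v)].
have lregF : forall v w h, lreg h (F v w) = F v (rG h *m w).
  move=> v w h; apply/ffunP => s; rewrite lregE !ffunE.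
  by rewrite repr_mxM ?inE // -mulmxA Hdot_adj.
pose e := F v1 v1.
have ke : forall h, gram_col rG v1 h = lreg h e by move=> h; rewrite lregF.
have Ve : gram_colspace rG v1 e.
  exists (fun g => (g == 1%g)%:R); apply/ffunP => s; rewrite !ffunE sum_eq1.
  by rewrite ffunE repr_mx1 mul1mx.
have [u Meu] : exists u, M e = F v2 u.
  have [c Hc] := M_maps _ Ve.
  exists (\sum_g c g *: (rG g *m v2)); rewrite Hc; apply/ffunP => s.
  by rewrite !ffunE Hdot_suml; apply: eq_bigr => g _; rewrite ffunE.
have MkG : forall h, M (gram_col rG v1 h) = F v2 (rG h *m u).
  by move=> h; rewrite ke M_Glinear Meu lregF.
have dep : [ffun s => \sum_g Hdot v1 (rG g *m v1) * gram_col rG v1 g s]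
         = [ffun s => (N * Hdot v1 v1) * e s].
  apply/ffunP => s; rewrite !ffunE.
  under eq_bigr => g _ do rewrite ffunE -(Hdot_conj (rG s *m v1)).
  by rewrite SO -/N mulrAC.
have dep2 := congr1 M dep; rewrite Msum MZ in dep2.
have key : forall s, Hdot u (rG s *m v2) = Hdot u v1 / Hdot v1 v1 * Hdot v1 (rG s *m v2).
  move=> s; move/ffunP/(_ s): dep2; rewrite !ffunE.
  under eq_bigr => g _ do rewrite MkG ffunE -(Hdot_conj (rG s *m v2)).
  rewrite SO -/N Meu ffunE => H.
  apply: (mulfI (mulf_neq0 N0 n10)); rewrite -H.
  by field.
set mu := Hdot u v1 / Hdot v1 v1.
have Meq : M e = [ffun s => mu * F v2 v1 s].
  by rewrite Meu; apply/ffunP => s; rewrite !ffunE key.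
have Lee : L2dot e e = N * Hdot v1 v1 * Hdot v1 v1.
  by rewrite /L2dot; under eq_bigr => x _ do rewrite !ffunE; rewrite SO.
have mu0 : mu != 0.
  apply/eqP => mu0; have := M_isometry _ _ Ve Ve; rewrite Meq mu0 Lee.
  rewrite /L2dot big1 => [/esym/eqP|x _]; last by rewrite !ffunE !mul0r.
  by move=> /eqP H; move: (mulf_neq0 (mulf_neq0 N0 n10) n10); rewrite H eqxx.
have Mk : forall h s, M (gram_col rG v1 h) s = mu * Hdot (rG h *m v1) (rG s *m v2).
  move=> h s; rewrite ke M_Glinear Meq lregE !ffunE repr_mxM ?inE //.
  by rewrite -mulmxA Hdot_adj.
set c1 := (N * Hdot v1 v1)^-1.
set c2 := (N * Hdot v2 v2)^-1.
pose T (f : L2 gT) (g : gT) := \sum_h f h * Hdot (rG h *m v1) (rG g *m v2).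
have Mf : forall f, M f = M (Pv rG v1 f).
  move=> f.
  have orth : orth_to (gram_colspace rG v1) [ffun x => f x - Pv rG v1 f x].
    move=> w Vw; apply: (L2dot_span Vw) => h.
    by rewrite L2dot_subl C1 // subrr.
  have := M_linear 1 (Pv rG v1 f) [ffun x => f x - Pv rG v1 f x].
  rewrite (M_zero_orth _ orth) (_ : [ffun x => 1 * Pv rG v1 f x + _] = f).
    by move=> ->; apply/ffunP => x; rewrite !ffunE mul1r addr0.
  by apply/ffunP => x; rewrite !ffunE mul1r addrC subrK.
have L : forall f g, M f g = c1 * mu * T f g.
  move=> f g; rewrite Mf.
  rewrite (_ : Pv rG v1 f = [ffun g => \sum_h (c1 * f h) * gram_col rG v1 h g]).
    rewrite Msum ffunE /T !mulr_sumr; apply: eq_bigr => h _.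
    by rewrite Mk; ring.
  by apply/ffunP => x; rewrite !ffunE -/N -/c1 mulr_sumr; apply: eq_bigr => h _; rewrite mulrA.
have A1 : forall f a s, Achi (rchar rG) a (Pv rG v1 f) s
     = c1 * \sum_h f h * (N * Hdot (rG h *m v1) (rG (s * a)%g *m v1)).
  move=> f a s; rewrite /Achi /conv ffunE.
  transitivity (\sum_x \sum_h c1 * (f h * (Hdot (rG h *m v1) (rG x *m v1)
                  * (rchar rG ((x^-1 * s) * a)%g)^*))).
    apply: eq_bigr => x _; rewrite !ffunE -/N -/c1 -mulrA mulr_suml mulr_sumr.
    by apply: eq_bigr => h _; rewrite ffunE; ring.
  rewrite exchange_big mulr_sumr; apply: eq_bigr => h _.
  by rewrite -mulr_sumr -mulr_sumr CH.
have R : forall a f g, Pv rG v2 (Achi (rchar rG) a (Pv rG v1 f)) g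
     = c2 * c1 * N * N * Hdot v2 (rG a *m v1) * T f g.
  move=> a f g; rewrite ffunE -/N -/c2.
  transitivity (c2 * \sum_s \sum_h (c1 * N * f h) *
     (Hdot (rG h *m v1) (rG s *m (rG a *m v1)) * (Hdot (rG g *m v2) (rG s *m v2))^*)).
    congr (_ * _); apply: eq_bigr => s _; rewrite A1 -mulrA mulr_suml mulr_sumr.
    apply: eq_bigr => h _.
    rewrite ffunE -(Hdot_conj (rG g *m v2)) repr_mxM ?inE // -mulmxA.
    ring.
  rewrite exchange_big /T [RHS]mulr_sumr [LHS]mulr_sumr; apply: eq_bigr => h _.
  rewrite -mulr_sumr SO -/N.
  ring.
exists (fun a => c2 * N * N * Hdot v2 (rG a *m v1) / mu); split.
  move=> a f; rewrite (@projE _ _ rG rG_unitary rG_irr d_gt0 v1 v1_neq0).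
  rewrite (@projE _ _ rG rG_unitary rG_irr d_gt0 v2 v2_neq0).
  apply/ffunP => g; rewrite R ffunE L.
  by field.
have [a Ha] : exists a, Hdot v2 (rG a *m v1) != 0.
  case: (boolP [exists a, Hdot v2 (rG a *m v1) != 0]) => [/existsP //|/existsPn H].
  exfalso; move: (mulf_neq0 (mulf_neq0 N0 n20) n10).
  rewrite /N -SO big1 ?eqxx // => g _.
  by move: (H g); rewrite negbK => /eqP ->; rewrite mul0r.
exists a.
have c2n0 : c2 != 0 by rewrite invr_eq0 mulf_neq0.
apply: mulf_neq0; last by rewrite invr_eq0.
by apply: mulf_neq0 => //; apply: mulf_neq0 => //; apply: mulf_neq0.
Qed.
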